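(* Let $\gamma^*\ge 0$ and $\epsilon>0$, and let $u,\hat u:\mathbf{S}\to\mathbb{R}^{|P|}$ be two utility functions on the same finite game structure. If $|u_p(s)-\hat u_p(s)|\le\epsilon$ for every $(p,s)\in\mathcal{I}$ satisfying $\mathrm{Reg}_p(s;u)=0$ or $\mathrm{Reg}_p(s;\hat u)\le\gamma^*$, then $E(u)\subseteq E_{2\epsilon}(\hat u)$ and $E_\gamma(\hat u)\subseteq E_{2\epsilon+\gamma}(u)$ for all $0\le\gamma\le\gamma^*$.
   Context: A finite normal-form game structure: finite player set $P$, finite pure strategy sets $S_p$, pure profile space $\mathbf{S}=\prod_p S_p$, index set $\mathcal{I}=P\times\mathbf{S}$. For a utility function $u:\mathbf{S}\to\mathbb{R}^{|P|}$, a pure profile $s$ and player $p$, $A_{p,s}$ is the set of pure profiles obtained by replacing $p$'s strategy in $s$ by any $t\in S_p$; $\mathrm{Reg}_p(s;u)=\sup_{s'\in A_{p,s}}u_p(s')-u_p(s)$, $\mathrm{Reg}(s;u)=\max_p\mathrm{Reg}_p(s;u)$. $E_\gamma(u)=\{s\in\mathbf{S}:\mathrm{Reg}(s;u)\le\gamma\}$ and $E(u)=E_0(u)$. *)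

(* Defs.v *)
From HB Require Import structures.
From mathcomp Require Import all_boot all_order all_algebra.
Set Implicit Arguments. Unset Strict Implicit. Unset Printing Implicit Defensive.
Import Order.TTheory GRing.Theory Num.Theory.
Local Open Scope ring_scope.

Definition profile (P : finType) (S : P -> finType) := {dffun forall p : P, S p}.

Definition deviate (P : finType) (S : P -> finType) (s : profile S) (p : P)
  (t : S p) : profile S :=
  [ffun q => match boolP (p == q) with
             | AltTrue e => ecast q (S q) (eqP e) t
             | AltFalse _ => s q end].

(* utility function u : S -> R^|P|, written u s p = u_p(s) *)
Definition utility (R : realFieldType) (P : finType) (S : P -> finType) :=
  profile S -> P -> R.

(* Reg_p(s;u) = sup_{s' in A_{p,s}} u_p(s') - u_p(s).  A_{p,s} is finite and
   contains s itself (t = s p), so the sup is a max; seeding the big max with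
   u_p(s) does not change its value. *)
Definition regp (R : realFieldType) (P : finType) (S : P -> finType)
  (u : utility R S) (p : P) (s : profile S) : R :=
  \big[Num.max/u s p]_(t : S p) u (deviate s t) p - u s p.

Definition reg (R : realFieldType) (P : finType) (S : P -> finType)
  (u : utility R S) (s : profile S) : R :=
  \big[Num.max/0]_(p : P) regp u p s.

Definition Eg (R : realFieldType) (P : finType) (S : P -> finType)
  (u : utility R S) (g : R) : {set profile S} :=
  [set s | reg u s <= g].

Definition E (R : realFieldType) (P : finType) (S : P -> finType)
  (u : utility R S) : {set profile S} := Eg u 0.

(* Main.v *)
Require Import Defs.
From HB Require Import structures.
From mathcomp Require Import all_boot all_order all_algebra.
From mathcomp Require Import lra.
Import Order.TTheory GRing.Theory Num.Theory.
Local Open Scope ring_scope.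

Section Aux.
Local Set Implicit Arguments.
Variables (P : finType) (S : P -> finType).

Lemma dev_same (s : profile S) p (t : S p) : deviate s t p = t.
Proof.
rewrite /deviate ffunE; destruct (boolP (p == p)) as [e|e]; last by rewrite eqxx in e.
by rewrite (eq_irrelevance (eqP e) (erefl p)).
Qed.

Lemma dev_other (s : profile S) p (t : S p) q : p != q -> deviate s t q = s q.
Proof.
move=> ne; rewrite /deviate ffunE; destruct (boolP (p == q)) as [e|e] => //.
by rewrite e in ne.
Qed.

Lemma dev_dev (s : profile S) p (t t' : S p) :
  deviate (deviate s t) t' = deviate s t'.
Proof.
apply/ffunP => q; case: (eqVneq p q) => [<-|ne].
  by rewrite !dev_same.
by rewrite !dev_other.
Qed.

Lemma dev_id (s : profile S) p : deviate s (s p) = s.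
Proof.
apply/ffunP => q; case: (eqVneq p q) => [<-|ne].
  by rewrite !dev_same.
by rewrite !dev_other.
Qed.

Variable R : realFieldType.

Definition M (u : utility R S) p (s : profile S) :=
  \big[Num.max/u s p]_(t : S p) u (deviate s t) p.

Lemma M_ge (u : utility R S) p s (t : S p) : u (deviate s t) p <= M u p s.
Proof. exact: le_bigmax. Qed.

Lemma M_le (u : utility R S) p s m :
  (forall t : S p, u (deviate s t) p <= m) -> M u p s <= m.
Proof.
move=> H; apply: bigmax_le => // ; first by rewrite -{1}(dev_id s p).
Qed.

Lemma M_dev (u : utility R S) p s (t : S p) : M u p (deviate s t) = M u p s.
Proof.
apply/le_anti/andP; split; apply: M_le => t'.
  by rewrite dev_dev M_ge.
by rewrite -(dev_dev s p t) M_ge.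
Qed.

Lemma M_arg (u : utility R S) p s : exists t : S p, M u p s = u (deviate s t) p.
Proof.
exists [arg max_(t > s p) u (deviate s t) p]%O.
apply/le_anti/andP; split; last exact: M_ge.
case: arg_maxP => // i _ H; apply: M_le => t; exact: H.
Qed.

Lemma regpE (u : utility R S) p s : regp u p s = M u p s - u s p.
Proof. by []. Qed.

Lemma regp_ge0 (u : utility R S) p s : 0 <= regp u p s.
Proof. by rewrite regpE subr_ge0 -{1}(dev_id s p) M_ge. Qed.

Lemma regp_dev0 (u : utility R S) p s (t : S p) :
  M u p s = u (deviate s t) p -> regp u p (deviate s t) = 0.
Proof. by rewrite regpE M_dev => ->; rewrite subrr. Qed.

Lemma reg_le (u : utility R S) s g :
  (reg u s <= g) = (0 <= g) && [forall p, regp u p s <= g].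
Proof.
apply/bigmax_leP/andP => [[h1 h2]|[h1 /forallP h2]]; split => //.
  by apply/forallP => p; apply: h2.
Qed.

End Aux.

Theorem lemma2 (R : realFieldType) (P : finType) (S : P -> finType)
  (u uh : utility R S) (gstar eps : R) :
  0 <= gstar -> 0 < eps ->
  (forall (p : P) (s : profile S),
     regp u p s = 0 \/ regp uh p s <= gstar ->
     `|u s p - uh s p| <= eps) ->
  E u \subset Eg uh (2 * eps) /\
  (forall g : R, 0 <= g -> g <= gstar ->
     Eg uh g \subset Eg u (2 * eps + g)).
Proof.
move=> g0 e0 H; split.
  apply/subsetP => s; rewrite !inE reg_le => /andP[_ /forallP h].
  rewrite reg_le; apply/andP; split; first by rewrite mulr_ge0 // ltW.
  apply/forallP => p.
  have r0 : regp u p s = 0 by apply/le_anti; rewrite h regp_ge0.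
  have hs := H p s (or_introl r0).
  have [t ht] := M_arg uh p s.
  have z : regp uh p (deviate s t) <= gstar by rewrite (regp_dev0 t ht).
  have hs' := H p _ (or_intror z).
  have := M_ge u p s t.
  move: r0; rewrite !regpE ht => /eqP; rewrite subr_eq0 => /eqP ->.
  move: hs hs'; set a := u s p; set b := uh s p; set c := u _ p; set d := uh _ p.
  rewrite !ler_norml => /andP[h1 h2] /andP[h3 h4] h5.
  lra.
move=> g gg0 ggs; apply/subsetP => s; rewrite !inE !reg_le => /andP[_ /forallP h].
apply/andP; split; first by rewrite addr_ge0 // mulr_ge0 // ltW.
apply/forallP => p.
have hs := H p s (or_intror (le_trans (h p) ggs)).
have [t ht] := M_arg u p s.
have hs' := H p _ (or_introl (regp_dev0 t ht)).
have := M_ge uh p s t.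
have := h p.
rewrite !regpE ht.
move: hs hs'; set a := u s p; set b := uh s p; set c := u _ p; set d := uh _ p.
move: (M uh p s) => m.
rewrite !ler_norml => /andP[h1 h2] /andP[h3 h4] h5 h6.
lra.
Qed.
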